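(* Let $G$ be a finite group. Then $G/[\delta_i,G]$ is a nested group for every integer $i\ge 1$. Moreover, $G$ is nested if and only if $\delta_\infty=1$.
   Context: All groups are finite. For $\chi\in\mathrm{Irr}(G)$, the center of $\chi$ is $Z(\chi)=\{g\in G : |\chi(g)|=\chi(1)\}$. A group is nested if for any two of its irreducible characters $\chi,\psi$ either $Z(\chi)\le Z(\psi)$ or $Z(\psi)\le Z(\chi)$. For a normal subgroup $N$ of $G$, $\mathrm{Irr}(G\mid N)$ denotes the set of $\chi\in\mathrm{Irr}(G)$ with $N\not\le\ker(\chi)$. Define $\delta_1=G$ and $\delta_{i+1}=\prod_{\chi\in\mathrm{Irr}(G\mid[\delta_i,G])}Z(\chi)$ for $i\ge 1$, with the convention that an empty product is the trivial subgroup. This is a descending chain of normal subgroups which stabilizes; $\delta_\infty$ denotes its terminal term. *)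

(* Defs.v *)
From mathcomp Require Import all_boot all_order all_algebra all_fingroup all_solvable all_field all_character.
Set Implicit Arguments. Unset Strict Implicit. Unset Printing Implicit Defensive.
Import GRing.Theory Num.Theory.
Local Open Scope ring_scope.
Local Open Scope group_scope.

(* Z(chi) for chi irreducible is the library's cfcenter 'Z(chi)%CF,
   which for a character chi equals [set g in G | `|chi g| == chi 1]. *)

Definition nested (gT : finGroupType) (G : {group gT}) : Prop :=
  forall i j : Iirr G,
    ('Z('chi_i)%CF \subset 'Z('chi_j)%CF) \/ ('Z('chi_j)%CF \subset 'Z('chi_i)%CF).

(* delta_chain G n is delta_{n+1} of the paper (so delta_chain G 0 = G).
   delta_{i+1} = product of Z(chi) over chi in Irr(G | [delta_i, G]),
   realized as the subgroup generated by their union (the Z(chi) are normal),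
   which is trivial when the index set is empty. *)
Fixpoint delta_chain (gT : finGroupType) (G : {group gT}) (n : nat) : {set gT} :=
  match n with
  | 0 => G
  | n'.+1 =>
      <<\bigcup_(i : Iirr G | ~~ ([~: delta_chain G n', G]%g \subset cfker 'chi_i))
           'Z('chi_i)%CF>>
  end.

(* Main.v *)
Require Import Defs.
From mathcomp Require Import all_boot all_order all_algebra all_fingroup all_solvable all_field all_character.
Set Implicit Arguments. Unset Strict Implicit. Unset Printing Implicit Defensive.
Import GRing.Theory Num.Theory.
Local Open Scope ring_scope.
Local Open Scope group_scope.

Section Aux.
Variables (gT : finGroupType) (G : {group gT}).

Lemma ZC (i : Iirr G) : [~: 'Z('chi_i)%CF, G] \subset cfker 'chi_i.
Proof.
have nKG := normal_norm (cfker_normal 'chi_i).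
rewrite -quotient_cents2 ?(subset_trans (cfcenter_sub _)) //.
by rewrite cfcenter_eq_center subsetIr.
Qed.

Lemma CZ (A : {set gT}) (i : Iirr G) : A \subset G ->
  [~: A, G] \subset cfker 'chi_i -> A \subset 'Z('chi_i)%CF.
Proof.
move=> sAG sR.
have nKG := normal_norm (cfker_normal 'chi_i).
rewrite -(quotientSGK _ (normal_sub (cfker_center_normal _))); last first.
  exact: subset_trans sAG nKG.
rewrite cfcenter_eq_center /center subsetI quotientS //=.
by rewrite quotient_cents2r.
Qed.

Local Notation d := (delta_chain G).

Lemma d_sub n : d n \subset G.
Proof.
case: n => [|n] //=; rewrite gen_subG; apply/bigcupsP => i _.
exact: cfcenter_sub.
Qed.

Lemma d_group n : group_set (d n).
Proof. case: n => [|n]; [exact: (groupP G) | exact: (groupP <<_>>%G)]. Qed.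

Lemma dA n (i : Iirr G) : ~~ ([~: d n, G] \subset cfker 'chi_i) ->
  'Z('chi_i)%CF \subset d n.+1.
Proof.
move=> H; rewrite /=; apply: subset_trans (subset_gen _).
by apply: (bigcup_sup i).
Qed.

Lemma dB n : d n.+1 \subset d n.
Proof.
elim: n => [|n IH]; first exact: d_sub.
rewrite [d n.+2]/= gen_subG; apply/bigcupsP => i H; apply: dA.
apply: contra H => H; apply: subset_trans H; exact: commSg.
Qed.

Lemma dmono m n : (m <= n)%N -> d n \subset d m.
Proof.
elim: n => [|n IH]; first by rewrite leqn0 => /eqP->.
rewrite leq_eqVlt => /orP[/eqP->//|]; rewrite ltnS => /IH.
exact: subset_trans (dB n).
Qed.

Lemma dD n (i : Iirr G) : [~: d n, G] \subset cfker 'chi_i ->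
  exists j, (j <= n)%N /\ 'Z('chi_i)%CF = d j.
Proof.
elim: n => [|n IH] H.
  exists 0%N; split => //; apply/eqP; rewrite eqEsubset cfcenter_sub /=.
  exact: CZ.
have [H'|H'] := boolP ([~: d n, G] \subset cfker 'chi_i).
  by have [j [? ?]] := IH H'; exists j; split => //; apply: leqW.
exists n.+1; split => //; apply/eqP; rewrite eqEsubset dA //.
exact: CZ (d_sub _) H.
Qed.

Lemma dnested n (i j : Iirr G) : [~: d n, G] \subset cfker 'chi_i ->
  [~: d n, G] \subset cfker 'chi_j ->
  ('Z('chi_i)%CF \subset 'Z('chi_j)%CF) \/ ('Z('chi_j)%CF \subset 'Z('chi_i)%CF).
Proof.
move=> /dD[a [_ ->]] /dD[b [_ ->]].
have [ab|ba] := leqP a b; [right|left]; apply: dmono => //; exact: ltnW.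
Qed.

Lemma d_normal n : [~: d n, G] <| G.
Proof.
rewrite /normal commg_normr andbT.
apply: subset_trans (commSg _ (d_sub n)) _.
by rewrite commg_subr normG.
Qed.

Lemma mod_center (N : {group gT}) (j : Iirr (G / N)) x : N <| G -> x \in G ->
  (coset N x \in 'Z('chi_j)%CF) = (x \in 'Z('chi_(mod_Iirr j))%CF).
Proof.
move=> nNG Gx.
have Gq : coset N x \in (G / N)%g := mem_quotient N Gx.
rewrite (irr_cfcenterE j Gq) (irr_cfcenterE _ Gx) (mod_IirrE j nNG).
by rewrite cfModE // cfMod1.
Qed.

Lemma mod_sub (N : {group gT}) (j1 j2 : Iirr (G / N)) : N <| G ->
  'Z('chi_(mod_Iirr j1))%CF \subset 'Z('chi_(mod_Iirr j2))%CF ->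
  'Z('chi_j1)%CF \subset 'Z('chi_j2)%CF.
Proof.
move=> nNG sZ; apply/subsetP => y Zy.
have := subsetP (cfcenter_sub _) y Zy; case/morphimP => x _ Gx yE.
move: Zy; rewrite yE !mod_center // => Zx.
exact: subsetP sZ x Zx.
Qed.

Lemma part1 n : nested (G / [~: d n, G])%G.
Proof.
move=> j1 j2.
have nNG := d_normal n.
have k1 : [~: d n, G] \subset cfker 'chi_(mod_Iirr j1).
  by rewrite (mod_IirrE _ nNG) cfker_mod.
have k2 : [~: d n, G] \subset cfker 'chi_(mod_Iirr j2).
  by rewrite (mod_IirrE _ nNG) cfker_mod.
case: (dnested k1 k2) => H; [left|right]; exact: mod_sub H.
Qed.

Lemma stab : exists m, d m.+1 = d m.
Proof.
suff: forall k, (exists m, d m.+1 = d m) \/ (k + #|d k| <= #|G|)%N.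
  case/(_ #|G|.+1) => // H; exfalso; move: H; rewrite addSn ltnNge leq_addr //.
elim=> [|k IHk]; first by right; rewrite add0n subset_leq_card // d_sub.
case: IHk => [Hl|IH]; first by left.
have [E|E] := eqVneq (d k.+1) (d k); first by left; exists k.
right; apply: leq_trans IH; rewrite addSn -addnS leq_add2l.
by apply: proper_card; rewrite properEneq E dB.
Qed.

Lemma part2 : nested G -> exists n, forall m, (n <= m)%N -> d m = 1.
Proof.
move=> nG; have [m Em] := stab.
suff E1 : d m.+1 = 1.
  exists m => k km; apply/eqP; rewrite eqEsubset; apply/andP; split.
    rewrite -E1 Em; exact: dmono.
  by rewrite sub1set; case/andP: (d_group k).
set P := fun i : Iirr G => ~~ ([~: d m, G] \subset cfker 'chi_i).
have [i0 Pi0|noP] := pickP P; last first.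
  rewrite /= big_pred0; first exact: gen0.
  by move=> i; have := noP i.
case: (@arg_maxnP _ i0 P (fun i => #|'Z('chi_i)%CF|) Pi0) => i Pi maxi.
exfalso; move: Pi; rewrite /P; apply/negP/negPn.
apply: subset_trans (ZC i); apply: commSg; rewrite -Em /= gen_subG.
apply/bigcupsP => k Pk.
case: (nG k i) => // sik.
have := maxi k Pk => le.
suff -> : 'Z('chi_k)%CF = 'Z('chi_i)%CF by [].
by apply/eqP; rewrite eq_sym eqEcard sik.
Qed.

End Aux.

Theorem theoremG (gT : finGroupType) (G : {group gT}) :
  (forall n : nat, nested (G / [~: delta_chain G n, G])%G) /\
  (nested G <-> exists n : nat, forall m : nat, (n <= m)%N -> delta_chain G m = 1).
Proof.
split; first exact: part1.
split; first exact: part2.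
case=> n Hn i j; apply: (@dnested _ G n); by rewrite Hn // commGC commG1 sub1G.
Qed.
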